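(* Let $(S,\mathcal{A},\mu)$ be a complete, $\sigma$-finite measure space, $E$ a Köthe function space over $(S,\mathcal{A},\mu)$, and $X$ a locally almost square real Banach space such that the simple functions are dense in $E(X)$. Then $E(X)$ is locally almost square. In particular, if $p\in[1,\infty)$ and $X$ is locally almost square, then so is $L^p(\mu,X)$. Moreover, $L^\infty(\mu,X)$ is almost square (resp. locally almost square) whenever $X$ is almost square (resp. locally almost square).
   Context: A real Banach space $X$ is almost square (ASQ) if for all $n\in\mathbb{N}$ and $x_1,\dots,x_n\in S_X$ there is a sequence $(y_k)$ in $B_X$ with $\|y_k\|\to1$ and $\|x_i+y_k\|\to1$ for all $i=1,\dots,n$. $X$ is locally almost square (LASQ) if for every $x\in S_X$ there is a sequence $(y_k)$ in $B_X$ with $\|y_k\|\to1$ and $\|x\pm y_k\|\to1$. ($S_X$ unit sphere, $B_X$ closed unit ball.) Köthe function space over $(S,\mathcal{A},\mu)$: a Banach space $(E,\|\cdot\|_E)$ of real-valued measurable functions on $S$ (modulo a.e. equality) such that $\chi_A\in E$ whenever $\mu(A)<\infty$; every $f\in E$ is integrable over every set of finite measure; and if $g$ is measurable, $f\in E$ and $|g|\le|f|$ a.e., then $g\in E$ and $\|g\|_E\le\|f\|_E$. A function $f:S\to X$ is simple if it is constant on each of finitely many disjoint measurable sets of finite measure and zero outside their union; Bochner-measurable if it is an a.e. limit of simple functions. $E(X)$ is the space of Bochner-measurable $f:S\to X$ (modulo a.e.) with $\|f(\cdot)\|\in E$, normed by $\|f\|=\|\,\|f(\cdot)\|\,\|_E$.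 $L^p(\mu,X)$ denotes the Lebesgue–Bochner spaces. *)

(* Defs.v *)
From HB Require Import structures.
From mathcomp Require Import all_boot all_order all_algebra.
From mathcomp Require Import all_classical all_reals all_analysis.
Set Implicit Arguments. Unset Strict Implicit. Unset Printing Implicit Defensive.
Import Order.TTheory GRing.Theory Num.Theory.
Import numFieldNormedType.Exports.
Local Open Scope classical_set_scope.
Local Open Scope ring_scope.

(* Almost squareness for a (semi)normed space given as a carrier set [S]
   (closed under the vector operations) inside a zmodType [V], with norm [N]. *)
Definition ASQ_in {R : realType} {V : zmodType} (S : set V) (N : V -> R) : Prop :=
  forall (n : nat) (x : 'I_n.+1 -> V), (forall i, S (x i) /\ N (x i) = 1) ->
  exists y : nat -> V,
    (forall k, S (y k) /\ N (y k) <= 1) /\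
    (N (y k) @[k --> \oo] --> (1 : R)) /\
    (forall i, N (x i + y k) @[k --> \oo] --> (1 : R)).

Definition LASQ_in {R : realType} {V : zmodType} (S : set V) (N : V -> R) : Prop :=
  forall x : V, S x -> N x = 1 ->
  exists y : nat -> V,
    (forall k, S (y k) /\ N (y k) <= 1) /\
    (N (y k) @[k --> \oo] --> (1 : R)) /\
    (N (x + y k) @[k --> \oo] --> (1 : R)) /\
    (N (x - y k) @[k --> \oo] --> (1 : R)).

Definition ASQ {R : realType} (X : completeNormedModType R) : Prop :=
  ASQ_in [set: X] (fun x : X => `|x|).
Definition LASQ {R : realType} (X : completeNormedModType R) : Prop :=
  LASQ_in [set: X] (fun x : X => `|x|).

Section BochnerDefs.
Context {d : measure_display} {T : measurableType d} {R : realType}.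
Variable mu : {measure set T -> \bar R}.
Variable X : completeNormedModType R.

Definition simple_fun (f : T -> X) : Prop :=
  exists (n : nat) (A : 'I_n -> set T) (x : 'I_n -> X),
    (forall i, measurable (A i) /\ (mu (A i) < +oo)%E) /\
    (forall i j, i != j -> A i `&` A j = set0) /\
    f = (fun t => \sum_(i < n) ((\1_(A i) t : R) *: x i)).

Definition bochner_measurable (f : T -> X) : Prop :=
  exists s : nat -> T -> X, (forall n, simple_fun (s n)) /\
    {ae mu, forall t, s n t @[n --> \oo] --> f t}.

Definition EX (inE : set (T -> R)) : set (T -> X) :=
  fun f => bochner_measurable f /\ inE (fun t => `|f t|).
Definition EX_norm (nE : (T -> R) -> R) (f : T -> X) : R := nE (fun t => `|f t|).

Definition simple_dense_in_EX (inE : set (T -> R)) (nE : (T -> R) -> R) : Prop :=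
  forall f, EX inE f -> forall e : R, 0 < e ->
    exists s, simple_fun s /\ EX_norm nE (fun t => f t - s t) < e.

Definition Lp_set (p : \bar R) : set (T -> X) :=
  fun f => bochner_measurable f /\
    (Lnorm mu p (fun t => (`|f t|)%:E) < +oo)%E.
Definition Lp_norm (p : \bar R) (f : T -> X) : R :=
  fine (Lnorm mu p (fun t => (`|f t|)%:E)).
End BochnerDefs.

(* Köthe function space over (T, mu): a Banach space (E, nE) of measurable
   real functions (identified modulo a.e. equality: we work with
   representatives, nE vanishing exactly on a.e.-null functions). *)
Definition kothe_space {d : measure_display} {T : measurableType d} {R : realType}
  (mu : {measure set T -> \bar R}) (inE : set (T -> R)) (nE : (T -> R) -> R) : Prop :=
  [/\
      (forall f, inE f -> measurable_fun setT f),
      inE (fun=> 0) /\ (forall f g, inE f -> inE g -> inE (f \+ g)) /\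
      (forall (a : R) f, inE f -> inE (fun t => a * f t)),
      (forall f g, inE f -> inE g -> nE (f \+ g) <= nE f + nE g) /\
      (forall (a : R) f, inE f -> nE (fun t => a * f t) = `|a| * nE f) /\
      (forall f, inE f -> (nE f = 0 <-> {ae mu, forall t, f t = 0})),
      (forall u : nat -> T -> R, (forall n, inE (u n)) ->
        (forall e : R, 0 < e -> exists N : nat, forall m n, (N <= m)%N -> (N <= n)%N ->
            nE (fun t => u m t - u n t) < e) ->
        exists f, inE f /\ nE (fun t => u n t - f t) @[n --> \oo] --> (0 : R))
    & [/\
      (forall A, measurable A -> (mu A < +oo)%E -> inE (\1_A : T -> R)),
      (forall f A, inE f -> measurable A -> (mu A < +oo)%E ->
          mu.-integrable A (fun t => (f t)%:E))
    &
      (forall f (g : T -> R), measurable_fun setT g -> inE f ->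
          {ae mu, forall t, `|g t| <= `|f t|} -> inE g /\ nE g <= nE f)]].

Arguments simple_fun {d T R} mu X f.
Arguments bochner_measurable {d T R} mu X f.
Arguments EX {d T R} mu X inE _.
Arguments EX_norm {d T R} X nE f.
Arguments simple_dense_in_EX {d T R} mu X inE nE.
Arguments Lp_set {d T R} mu X p _.
Arguments Lp_norm {d T R} mu X p f.

(* Main.v *)
Require Import Defs.
From HB Require Import structures.
From mathcomp Require Import all_boot all_order all_algebra.
From mathcomp Require Import all_classical all_reals all_analysis.
From mathcomp Require Import lra measurable_realfun ess_sup_inf.
Set Implicit Arguments. Unset Strict Implicit. Unset Printing Implicit Defensive.
Import Order.TTheory GRing.Theory Num.Theory.
Import numFieldNormedType.Exports.
Local Open Scope classical_set_scope.
Local Open Scope ring_scope.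



Section Xlemmas.
Context {R : realType} {X : normedModType R}.

Lemma phi_bound (u z : X) (t eps eta : R) :
  `|u| = 1 -> `|z| <= 1 -> 1 - eta <= `|z| -> `|u + z| <= 1 + eta ->
  `|u - z| <= 1 + eta -> 0 <= t -> t <= 1 + eps -> 0 <= eps ->
  1 - 3 * eta - eps <= `|t *: u + z| <= 1 + eta + eps.
Proof.
move=> nu z1 z2 uz1 uz2 t0 t1 e0.
have nuz : `|- u + z| <= 1 + eta by rewrite -normrN opprD opprK.
have lowuz : 1 - 3 * eta <= `|u + z|.
  have E : z *+ 2 = (u + z) + (- u + z) by rewrite mulr2n addrACA subrr add0r.
  have := ler_normD (u + z) (- u + z); rewrite -E normrMn. lra.
have [tle1|tgt1] := lerP t 1.
  have e1 : t *: u + z = t *: (u + z) + (1 - t) *: z.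
    by rewrite scalerDr scalerBl scale1r addrACA subrr addr0.
  have e2 : - (t *: u) + z = t *: (- u + z) + (1 - t) *: z.
    by rewrite scalerDr scalerBl scale1r addrACA subrr addr0 scalerN.
  have ub1 : `|t *: u + z| <= t * (1 + eta) + (1 - t).
    rewrite e1 (le_trans (ler_normD _ _)) // !normrZ (ger0_norm t0) ger0_norm ?subr_ge0 //.
    apply: lerD; first by apply: ler_wpM2l.
    by rewrite -[X in _ <= X]mulr1; apply: ler_wpM2l; rewrite ?subr_ge0.
  have ub2 : `|- (t *: u) + z| <= t * (1 + eta) + (1 - t).
    rewrite e2 (le_trans (ler_normD _ _)) // !normrZ (ger0_norm t0) ger0_norm ?subr_ge0 //.
    apply: lerD; first by apply: ler_wpM2l.
    by rewrite -[X in _ <= X]mulr1; apply: ler_wpM2l; rewrite ?subr_ge0.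
  have E : z *+ 2 = (t *: u + z) + (- (t *: u) + z) by rewrite mulr2n addrACA subrr add0r.
  have := ler_normD (t *: u + z) (- (t *: u) + z); rewrite -E normrMn => H.
  apply/andP; split; nra.
have e1 : t *: u + z = (u + z) + (t - 1) *: u.
  by rewrite scalerBl scale1r [RHS]addrC addrA addrNK.
have nt : `|(t - 1) *: u| = t - 1 by rewrite normrZ nu mulr1 gtr0_norm ?subr_gt0.
have := ler_normD (u + z) ((t - 1) *: u); rewrite -e1 nt => H1.
have E : u + z = (t *: u + z) - (t - 1) *: u by rewrite e1 addrK.
have := ler_normB (t *: u + z) ((t - 1) *: u); rewrite -E nt => H2.
apply/andP; split; lra.
Qed.

End Xlemmas.

Section SimpleLemmas.
Context {d : measure_display} {T : measurableType d} {R : realType}.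
Variable mu : {measure set T -> \bar R}.
Hypothesis cmu : measure_is_complete mu.

Lemma sum_in (V : lmodType R) n (A : 'I_n -> set T) (w : 'I_n -> V) t i :
  (forall i j, i != j -> A i `&` A j = set0) -> A i t ->
  \sum_(j < n) ((\1_(A j) t : R) *: w j) = w i.
Proof.
move=> dis Ait; rewrite (bigD1 i) //= big1 ?addr0.
  by rewrite indicE mem_set // scale1r.
move=> j ji; rewrite indicE memNset ?scale0r //.
move=> Ajt; have := dis _ _ ji; rewrite -subset0 => /(_ t); apply; by split.
Qed.

Lemma sum_out (V : lmodType R) n (A : 'I_n -> set T) (w : 'I_n -> V) t :
  (forall i, ~ A i t) -> \sum_(j < n) ((\1_(A j) t : R) *: w j) = 0.
Proof. by move=> H; rewrite big1 // => j _; rewrite indicE memNset ?scale0r. Qed.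

Lemma ae_lim_meas (h : nat -> T -> R) (g : T -> R) :
  (forall n, measurable_fun setT (h n)) ->
  (\forall t \ae mu, h ^~ t @ \oo --> g t) -> measurable_fun setT g.
Proof.
move=> mh hg; apply/measurable_EFinP.
apply: (@ae_measurable_fun _ _ _ mu cmu setT (fun t => limn_esup (fun n => (h n t)%:E))).
  apply: filterS hg => t ht _ /=; rewrite limn_esup_lim; apply/cvg_lim => //.
  apply: cvg_esups; apply: cvg_EFin; first exact: nearW.
  exact: ht.
apply: measurable_fun_limn_esup => n; exact/measurable_EFinP.
Qed.

Variable X : completeNormedModType R.

Definition mgood (F : T -> X) := forall c : X, measurable_fun setT (fun t => `|c + F t|).

Lemma mgood_cst c0 : mgood (fun _ => c0).
Proof. by move=> c; exact: measurable_cst. Qed.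

Lemma mgood_addsum (F : T -> X) n (A : 'I_n -> set T) (w : 'I_n -> X) :
  mgood F -> (forall i, measurable (A i)) ->
  mgood (fun t => F t + \sum_(i < n) ((\1_(A i) t : R) *: w i)).
Proof.
elim: n A w => [|n IH] A w mF mA c.
  by under eq_fun do rewrite big_ord0 addr0; exact: mF.
have mF' := IH (fun i => A (widen_ord (leqnSn n) i)) (fun i => w (widen_ord (leqnSn n) i)) mF (fun i => mA _).
set G := (fun t => _ + \sum_(i < n) _) in mF'.
have -> : (fun t => `|c + (F t + \sum_(i < n.+1) ((\1_(A i) t : R) *: w i))|) =
   (fun t => (\1_(A ord_max) t : R) * `|(c + w ord_max) + G t| +
             (1 - (\1_(A ord_max) t : R)) * `|c + G t|).
  apply/funext => t; rewrite big_ord_recr /= /G indicE.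
  case: (boolP (t \in A ord_max)) => _ /=.
    rewrite scale1r mul1r subrr mul0r addr0; congr `|_|.
    set S := \sum_(i < n) _; set W := w ord_max; by rewrite (addrA (F t)) (addrC (F t + S) W) addrA.
  by rewrite scale0r addr0 mul0r add0r subr0 mul1r addrA.
apply: measurable_funD; apply: measurable_funM.
- exact: measurable_indic.
- exact: mF'.
- apply: measurable_funB; [exact: measurable_cst | exact: measurable_indic].
- exact: mF'.
Qed.

Lemma simple_mgood_add (F : T -> X) s r : mgood F -> simple_fun mu X s ->
  mgood (fun t => F t + r *: s t).
Proof.
move=> mF [n [A [w [hA [_ ->]]]]].
have -> : (fun t => F t + r *: \sum_(i < n) ((\1_(A i) t : R) *: w i)) =
   (fun t => F t + \sum_(i < n) ((\1_(A i) t : R) *: (r *: w i))).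
  apply/funext => t; rewrite scaler_sumr; congr (_ + _); apply: eq_bigr => i _.
  by rewrite !scalerA mulrC.
by apply: mgood_addsum => // i; case: (hA i).
Qed.

Lemma simple_mgood s : simple_fun mu X s -> mgood s.
Proof.
move=> hs c; have := simple_mgood_add 1 (mgood_cst 0) hs c.
by under eq_fun do rewrite add0r scale1r.
Qed.

Lemma bochner_mgood f : bochner_measurable mu X f -> mgood f.
Proof.
move=> [s [hs ae]] c.
apply: (@ae_lim_meas (fun n t => `|c + s n t|)).
  by move=> n; apply: simple_mgood.
apply: filterS ae => t ht; apply: cvg_norm; apply: cvgD; first exact: cvg_cst.
exact: ht.
Qed.

Lemma bochner_mgood_add f s r : bochner_measurable mu X f -> simple_fun mu X s ->
  mgood (fun t => f t + r *: s t).
Proof.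
move=> bf hs; apply: simple_mgood_add => //; exact: bochner_mgood.
Qed.

Lemma simple_bochner0 (s : T -> X) : simple_fun mu X s -> bochner_measurable mu X s.
Proof. by move=> hs; exists (fun _ => s); split => //; apply: aeW => t; exact: cvg_cst. Qed.

End SimpleLemmas.


Lemma lasq_pick {R : realType} (X : completeNormedModType R) (lasq : LASQ X) (u : X) (e : R) :
  `|u| = 1 -> 0 < e ->
  exists z : X, `|z| <= 1 /\ 1 - e <= `|z| /\ `|u + z| <= 1 + e /\ `|u - z| <= 1 + e.
Proof.
move=> nu e0; have [y [hy [c1 [c2 c3]]]] := lasq u I nu.
have H : \forall k \near \oo, 1 - e <= `|y k| /\ `|u + y k| <= 1 + e /\ `|u - y k| <= 1 + e.
  near=> k; split; [|split].
  - have : `|1 - `|y k| | <= e by near: k; apply: cvgr_dist_le.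
    by rewrite ler_distlC => /andP[].
  - have : `|1 - `|u + y k| | <= e by near: k; apply: cvgr_dist_le.
    by rewrite ler_distlC => /andP[].
  - have : `|1 - `|u - y k| | <= e by near: k; apply: cvgr_dist_le.
    by rewrite ler_distlC => /andP[].
have [k [h1 [h2 h3]]] := filter_ex H.
by exists (y k); split => //; case: (hy k).
Unshelve. all: by end_near. Qed.

Lemma cvg_to1 {R : realType} (u : nat -> R) :
  (forall k, `|u k - 1| <= (k.+1%:R)^-1) -> u @ \oo --> (1 : R).
Proof.
move=> H; apply/cvgrPdist_le => eps eps0; near=> k.
rewrite distrC; apply: (le_trans (H k)); apply: ltW.
near: k; exact: (near_infty_natSinv_lt (PosNum eps0)).
Unshelve. all: by end_near. Qed.

Section Core.
Context {d : measure_display} {T : measurableType d} {R : realType}.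
Variable mu : {measure set T -> \bar R}.
Hypothesis cmu : measure_is_complete mu.
Variable X : completeNormedModType R.
Variable N : (T -> R) -> R.
Variable G : set (T -> R).
Hypothesis Gm : forall f, G f -> measurable_fun setT f.
Hypothesis Gmono : forall (f g : T -> R), G g -> measurable_fun setT f ->
  (forall t, 0 <= f t <= g t) -> G f /\ N f <= N g.
Hypothesis Gadd : forall (f g : T -> R), G f -> G g -> G (f \+ g) /\ N (f \+ g) <= N f + N g.
Hypothesis Gscale : forall (c : R) (f : T -> R), 0 <= c -> G f ->
  G (fun t => c * f t) /\ N (fun t => c * f t) = c * N f.
Hypothesis Gind : forall A, measurable A -> (mu A < +oo)%E -> G (\1_A).

Lemma G0 : G (fun _ => 0).
Proof.
have h1 : G (\1_set0) by apply: Gind => //; rewrite measure0.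
have [+ _] := Gscale (lexx 0) h1.
by under eq_fun do rewrite mul0r.
Qed.

Lemma Gsum n (A : 'I_n -> set T) (c : 'I_n -> R) :
  (forall i, measurable (A i) /\ (mu (A i) < +oo)%E) -> (forall i, 0 <= c i) ->
  G (fun t => \sum_(i < n) c i * (\1_(A i) t : R)).
Proof.
elim: n A c => [|n IH] A c hA hc.
  by under eq_fun do rewrite big_ord0; exact: G0.
under eq_fun do rewrite big_ord_recr /=.
have h1 : G (fun t => \sum_(i < n) c (widen_ord (leqnSn n) i) * \1_(A (widen_ord (leqnSn n) i)) t).
  by apply: IH => i; [apply: hA | apply: hc].
have h2 : G (fun t => c ord_max * \1_(A ord_max) t).
  by have [mA fA] := hA ord_max; apply: (Gscale _ _).1 => //; apply: Gind.
exact: (Gadd h1 h2).1.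
Qed.

Lemma Gmono' (f g : T -> R) : G g -> measurable_fun setT f -> (forall t, 0 <= f t <= g t) -> N f <= N g.
Proof. by move=> *; apply: (Gmono _ _ _).2. Qed.


Lemma Nnn (f : T -> R) : G f -> N (fun t => 0 * f t) = 0.
Proof. by move=> Gf; rewrite (Gscale (lexx 0) Gf).2 mul0r. Qed.

Lemma core_step (x : T -> X) (bx : bochner_measurable mu X x)
  (Gx : G (fun t => `|x t|)) (Nx : N (fun t => `|x t|) = 1)
  (dens : forall e, 0 < e -> exists s, simple_fun mu X s /\ N (fun t => `|x t - s t|) < e)
  (lasq : LASQ X) (e : R) (e0 : 0 < e) (e8 : 8 * e <= 1) :
  exists y, simple_fun mu X y /\ G (fun t => `|y t|) /\ N (fun t => `|y t|) <= 1 /\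
    1 - 7 * e <= N (fun t => `|y t|) /\
    `|N (fun t => `|x t + y t|) - 1| <= 7 * e /\ `|N (fun t => `|x t - y t|) - 1| <= 7 * e.
Proof.
have [s [hs Ns]] := dens e e0.
have hs' := hs; move: hs' => [n [A [v [hA [dis sE]]]]].
pose u i := `|v i|^-1 *: v i.
have zex : forall i, exists z : X, `|z| <= 1 /\ (v i != 0 ->
    1 - e <= `|z| /\ `|u i + z| <= 1 + e /\ `|u i - z| <= 1 + e).
  move=> i; case: (eqVneq (v i) 0) => vi0.
    by exists 0; split => //; rewrite normr0.
  have nu : `|u i| = 1.
    by rewrite normrZ ger0_norm ?invr_ge0 // mulVf // normr_eq0.
  have [z [h1 [h2 [h3 h4]]]] := lasq_pick lasq nu e0.
  by exists z; split.
have [z hz] := choice zex.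
pose lam := (1 + e)^-1.
have lam0 : 0 < lam by rewrite invr_gt0; lra.
have lamE : lam * (1 + e) = 1 by rewrite mulVf //; lra.
have lam1 : lam <= 1 by rewrite invf_le1; lra.
have lamge : 1 - e <= lam by nra.
pose y := fun t => \sum_(i < n) ((\1_(A i) t : R) *: ((lam * `|v i|) *: z i)).
have hy : simple_fun mu X y.
  by exists n, A, (fun i => (lam * `|v i|) *: z i); split => //; split.
have pw : forall t,
  [/\ lam * (1 - e) * `|s t| <= `|y t| <= lam * `|s t|,
      lam * (1 - 4 * e) * `|s t| <= `|s t + y t| <= lam * (1 + 2 * e) * `|s t| &
      lam * (1 - 4 * e) * `|s t| <= `|s t - y t| <= lam * (1 + 2 * e) * `|s t|].
  move=> t; rewrite sE /y.
  case: (pselect (exists i, A i t)) => [[i Ait]|nA]; last first.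
    have nA' : forall i, ~ A i t by move=> i Ait; apply: nA; exists i.
    rewrite (sum_out (v) nA') (sum_out (fun i => (lam * `|v i|) *: z i) nA').
    by rewrite normr0 subr0 addr0 normr0 !mulr0 lexx.
  rewrite (sum_in (v) dis Ait) (sum_in (fun i => (lam * `|v i|) *: z i) dis Ait).
  case: (eqVneq (v i) 0) => [->|vi0].
    by rewrite !normr0 !mulr0 scale0r ?add0r ?sub0r ?subr0 !normrN !normr0 ?mulr0 !lexx.
  have [h2 [h3 h4]] := (hz i).2 vi0; have h0 := (hz i).1.
  have nu : `|u i| = 1.
    by rewrite normrZ ger0_norm ?invr_ge0 // mulVf // normr_eq0.
  have vE : v i = `|v i| *: u i by rewrite /u scalerA mulfV ?normr_eq0 // scale1r.
  have lv0 : 0 <= lam * `|v i| by rewrite mulr_ge0 // ltW.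
  have E1 : v i + (lam * `|v i|) *: z i = (lam * `|v i|) *: ((1 + e) *: u i + z i).
    rewrite scalerDr scalerA -mulrA [`|v i| * _]mulrC mulrA lamE mul1r.
    by rewrite -vE.
  have E2 : v i - (lam * `|v i|) *: z i = - ((lam * `|v i|) *: ((1 + e) *: (- u i) + z i)).
    rewrite scalerDr scalerA -mulrA [`|v i| * _]mulrC mulrA lamE mul1r.
    by rewrite scalerN -vE opprD opprK.
  have P1 := phi_bound nu h0 h2 h3 h4 (t := 1 + e) (eps := e) (eta := e) ltac:(lra) (lexx _) (ltW e0).
  have nu' : `|- u i| = 1 by rewrite normrN.
  have h3' : `|- u i + z i| <= 1 + e by rewrite -normrN opprD opprK.
  have h4' : `|- u i - z i| <= 1 + e by rewrite -normrN opprD !opprK.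
  have P2 := phi_bound nu' h0 h2 h3' h4' (t := 1 + e) (eps := e) (eta := e) ltac:(lra) (lexx _) (ltW e0).
  rewrite E1 E2 normrN !normrZ normr_id (gtr0_norm lam0).
  move: P1 P2 => /andP[P1 P1'] /andP[P2 P2'].
  split; apply/andP; split; nra.
have pwy t := (let: And3 a _ _ := pw t in a).
have pwp t := (let: And3 _ a _ := pw t in a).
have pwm t := (let: And3 _ _ a := pw t in a).
pose gs := fun t => `|s t|.
have gsE : gs = fun t => \sum_(i < n) `|v i| * (\1_(A i) t : R).
  apply/funext => t; rewrite /gs sE.
  case: (pselect (exists i, A i t)) => [[i Ait]|nA]; last first.
    have nA' : forall i, ~ A i t by move=> i Ait; apply: nA; exists i.
    rewrite (sum_out (v) nA') normr0.
    by rewrite big1 // => j _; rewrite indicE memNset ?mulr0 // ; apply: nA'.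
  rewrite (sum_in (v) dis Ait).
  transitivity (\sum_(j < n) ((\1_(A j) t : R) *: `|v j|)).
    by rewrite (sum_in (fun j => `|v j|) dis Ait).
  by apply: eq_bigr => j _; rewrite mulrC.
have Ggs : G gs by rewrite gsE; apply: Gsum => // i; exact: normr_ge0.
have mgs := Gm Ggs.
have mxs : measurable_fun setT (fun t => `|x t - s t|).
  have := bochner_mgood_add cmu (-1) bx hs 0.
  by under eq_fun do rewrite add0r scaleN1r.
have my : measurable_fun setT (fun t => `|y t|).
  have := simple_mgood hy 0.
  by under eq_fun do rewrite add0r.
have mxpy : measurable_fun setT (fun t => `|x t + y t|).
  have := bochner_mgood_add cmu 1 bx hy 0.
  by under eq_fun do rewrite add0r scale1r.
have mxmy : measurable_fun setT (fun t => `|x t - y t|).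
  have := bochner_mgood_add cmu (-1) bx hy 0.
  by under eq_fun do rewrite add0r scaleN1r.
have Gxgs := (Gadd Gx Ggs).1.
have Gxs : G (fun t => `|x t - s t|).
  apply: (Gmono Gxgs mxs _).1 => t; rewrite normr_ge0 /=; exact: ler_normB.
have Gy : G (fun t => `|y t|).
  apply: (Gmono Ggs my _).1 => t; rewrite normr_ge0 /=.
  have [/andP[_ +] _ _] := pw t; move=> H; apply: (le_trans H).
  by rewrite /gs -[X in _ <= X]mul1r ler_wpM2r.
have Gxpy : G (fun t => `|x t + y t|).
  apply: (Gmono Gxgs mxpy _).1 => t; rewrite normr_ge0 /=.
  apply: (le_trans (ler_normD _ _)); apply: lerD => //.
  have [/andP[_ +] _ _] := pw t; move=> H; apply: (le_trans H).
  by rewrite /gs -[X in _ <= X]mul1r ler_wpM2r.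
have Gxmy : G (fun t => `|x t - y t|).
  apply: (Gmono Gxgs mxmy _).1 => t; rewrite normr_ge0 /=.
  apply: (le_trans (ler_normB _ _)); apply: lerD => //.
  have [/andP[_ +] _ _] := pw t; move=> H; apply: (le_trans H).
  by rewrite /gs -[X in _ <= X]mul1r ler_wpM2r.
set a := N (fun t => `|x t - s t|) in Ns.
have Ns_up : N gs <= 1 + a.
  have G2 := Gadd Gx Gxs.
  rewrite -Nx; apply: le_trans G2.2.
  apply: (Gmono' G2.1 mgs) => t; rewrite /gs normr_ge0 /=.
  have {1}-> : s t = x t - (x t - s t) by rewrite opprB addrC subrK.
  exact: ler_normB.
have Ns_lo : 1 <= N gs + a.
  have G2 := Gadd Ggs Gxs.
  rewrite -Nx; apply: le_trans G2.2.
  apply: (Gmono' G2.1 (Gm Gx)) => t; rewrite normr_ge0 /=.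
  have {1}-> : x t = s t + (x t - s t) by rewrite addrC subrK.
  exact: ler_normD.
have Ny_up : N (fun t => `|y t|) <= lam * N gs.
  have G2 := Gscale (ltW lam0) Ggs.
  rewrite -G2.2; apply: (Gmono' G2.1 my) => t; rewrite normr_ge0 /=.
  by have [/andP[_ +] _ _] := pw t.
have Ny_lo : lam * (1 - e) * N gs <= N (fun t => `|y t|).
  have c0 : 0 <= lam * (1 - e) by rewrite mulr_ge0 //; lra.
  have G2 := Gscale c0 Ggs.
  rewrite -G2.2; apply: (Gmono' Gy (Gm G2.1)) => t; rewrite /gs mulr_ge0 ?normr_ge0 //=.
  by have [/andP[+ _] _ _] := pw t.
have c1 : 0 <= lam * (1 + 2 * e) by rewrite mulr_ge0 //; lra.
have c2 : 0 <= lam * (1 - 4 * e) by rewrite mulr_ge0 //; lra.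
have G1 := Gscale c1 Ggs.
have G3 := Gscale c2 Ggs.
have Gxs1 := Gadd Gxs G1.1.
have Nxpy_up : N (fun t => `|x t + y t|) <= a + lam * (1 + 2 * e) * N gs.
  rewrite -G1.2; apply: le_trans Gxs1.2.
  apply: (Gmono' Gxs1.1 mxpy) => t; rewrite normr_ge0 /=.
  have -> : x t + y t = (x t - s t) + (s t + y t) by rewrite addrA subrK.
  apply: (le_trans (ler_normD _ _)); apply: lerD => //.
  by have [_ /andP[_ +] _] := pw t.
have Nxmy_up : N (fun t => `|x t - y t|) <= a + lam * (1 + 2 * e) * N gs.
  rewrite -G1.2; apply: le_trans Gxs1.2.
  apply: (Gmono' Gxs1.1 mxmy) => t; rewrite normr_ge0 /=.
  have -> : x t - y t = (x t - s t) + (s t - y t) by rewrite addrA subrK.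
  apply: (le_trans (ler_normD _ _)); apply: lerD => //.
  by have [_ _ /andP[_ +]] := pw t.
have Nxpy_lo : lam * (1 - 4 * e) * N gs <= N (fun t => `|x t + y t|) + a.
  have G2 := Gadd Gxpy Gxs.
  rewrite -G3.2; apply: le_trans G2.2.
  apply: (Gmono' G2.1 (Gm G3.1)) => t; rewrite mulr_ge0 ?normr_ge0 //=.
  have [_ /andP[+ _] _] := pw t; move=> H; apply: (le_trans H).
  have -> : s t + y t = (x t + y t) - (x t - s t) by rewrite opprB [RHS]addrC addrA subrK.
  exact: ler_normB.
have Nxmy_lo : lam * (1 - 4 * e) * N gs <= N (fun t => `|x t - y t|) + a.
  have G2 := Gadd Gxmy Gxs.
  rewrite -G3.2; apply: le_trans G2.2.
  apply: (Gmono' G2.1 (Gm G3.1)) => t; rewrite mulr_ge0 ?normr_ge0 //=.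
  have [_ _ /andP[+ _]] := pw t; move=> H; apply: (le_trans H).
  have -> : s t - y t = (x t - y t) - (x t - s t) by rewrite opprB [RHS]addrC addrA subrK.
  exact: ler_normB.
exists y; split => //; split => //.
have ae : a < e := Ns.
set Ng := N gs in Ns_up Ns_lo Ny_up Ny_lo Nxpy_up Nxmy_up Nxpy_lo Nxmy_lo.
set Ny := N (fun t => `|y t|) in Ny_up Ny_lo *.
set Np := N (fun t => `|x t + y t|) in Nxpy_up Nxpy_lo *.
set Nm := N (fun t => `|x t - y t|) in Nxmy_up Nxmy_lo *.
have hNg : 1 - e <= Ng by lra.
have hNg' : Ng <= 1 + e by lra.
have h1 : lam * Ng <= 1 by rewrite -lamE; apply: ler_wpM2l => //; exact: ltW.
split; first lra.
have c0 : 0 <= lam * (1 - e) by rewrite mulr_ge0 //; lra.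
have s1 := ler_wpM2l c0 hNg.
have c0' : 0 <= (1 - e) * (1 - e) by rewrite mulr_ge0 //; lra.
have s2 := ler_wpM2r c0' lamge.
have s3 : 1 - 3 * e <= (1 - e) * ((1 - e) * (1 - e)) by nra.
split; first by rewrite mulrA in s2; lra.
have s4 := ler_wpM2l c1 hNg'.
have s5 : lam * (1 + 2 * e) * (1 + e) = 1 + 2 * e.
  by rewrite -mulrA [(1 + 2 * e) * _]mulrC mulrA lamE mul1r.
have s6 := ler_wpM2l c2 hNg.
have c4 : 0 <= (1 - 4 * e) * (1 - e) by rewrite mulr_ge0 //; lra.
have s7 := ler_wpM2r c4 lamge.
have s8 : 1 - 6 * e <= (1 - e) * ((1 - 4 * e) * (1 - e)) by nra.
rewrite !mulrA in s7.
by split; rewrite ler_distlC; apply/andP; split; lra.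
Qed.


Lemma core_main (x : T -> X) (bx : bochner_measurable mu X x)
  (Gx : G (fun t => `|x t|)) (Nx : N (fun t => `|x t|) = 1)
  (dens : forall e, 0 < e -> exists s, simple_fun mu X s /\ N (fun t => `|x t - s t|) < e)
  (lasq : LASQ X) :
  exists y : nat -> T -> X,
    (forall k, simple_fun mu X (y k) /\ G (fun t => `|y k t|) /\ N (fun t => `|y k t|) <= 1) /\
    (N (fun t => `|y k t|) @[k --> \oo] --> (1 : R)) /\
    (N (fun t => `|x t + y k t|) @[k --> \oo] --> (1 : R)) /\
    (N (fun t => `|x t - y k t|) @[k --> \oo] --> (1 : R)).
Proof.
pose e k : R := (k.+1%:R)^-1 / 8.
have e0 k : 0 < e k by rewrite divr_gt0 // invr_gt0.
have q1 k : 0 < (k.+1%:R)^-1 :> R /\ (k.+1%:R)^-1 <= 1 :> R.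
  by split; [rewrite invr_gt0 // | rewrite invf_le1 // ?ler1n].
have e8 k : 8 * e k <= 1 by have [a b] := q1 k; rewrite /e; move: a b; move: (k.+1%:R)^-1 => q a b; lra.
have e7 k : 7 * e k <= (k.+1%:R)^-1 by have [a b] := q1 k; rewrite /e; move: a b; move: (k.+1%:R)^-1 => q a b; lra.
have H k := core_step bx Gx Nx dens lasq (e0 k) (e8 k).
have [y hy] := choice H.
exists y; split; first by move=> k; have [? [? [? _]]] := hy k.
split; [|split]; apply: cvg_to1 => k; have [_ [_ [h1 [h2 [h3 h4]]]]] := hy k.
- apply: le_trans (e7 k); rewrite ler_distlC; apply/andP; split; lra.
- exact: le_trans (e7 k).
- exact: le_trans (e7 k).
Qed.

End Core.


Lemma simple_bochner {d : measure_display} {T : measurableType d} {R : realType}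
  (mu : {measure set T -> \bar R}) (X : completeNormedModType R) (s : T -> X) :
  simple_fun mu X s -> bochner_measurable mu X s.
Proof.
move=> hs; exists (fun _ => s); split => //.
by apply: aeW => t; exact: cvg_cst.
Qed.

Lemma part1 {d : measure_display} {T : measurableType d} {R : realType}
  (mu : {measure set T -> \bar R}) (cmu : measure_is_complete mu)
  (X : completeNormedModType R) (inE : set (T -> R)) (nE : (T -> R) -> R) :
  kothe_space mu inE nE -> LASQ X -> simple_dense_in_EX mu X inE nE ->
  LASQ_in (EX mu X inE) (EX_norm X nE).
Proof.
move=> [Km [K0 [Kadd Ksc]] [Ktri [Khom Kz]] Kc [Kind Kint Kid]] lasq dens x [bx Ex] Nx.
have Gmono : forall (f g : T -> R), inE g -> measurable_fun setT f ->
  (forall t, 0 <= f t <= g t) -> inE f /\ nE f <= nE g.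
  move=> f g Eg mf fg; apply: Kid => //; apply: aeW => t.
  have /andP[h1 h2] := fg t; rewrite !ger0_norm //; exact: le_trans h2.
have Gadd : forall (f g : T -> R), inE f -> inE g -> inE (f \+ g) /\ nE (f \+ g) <= nE f + nE g.
  by move=> f g Ef Eg; split; [apply: Kadd | apply: Ktri].
have Gscale : forall (c : R) (f : T -> R), 0 <= c -> inE f ->
    inE (fun t => c * f t) /\ nE (fun t => c * f t) = c * nE f.
  by move=> c f c0 Ef; split; [apply: Ksc | rewrite Khom // ger0_norm].
have [y [hy [c1 [c2 c3]]]] := core_main cmu Km Gmono Gadd Gscale Kind bx Ex Nx
  (fun e e0 => dens x (conj bx Ex) e e0) lasq.
exists y; split.
  by move=> k; have [h1 [h2 h3]] := hy k; split => //; split => //; exact: simple_bochner.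
by split; [exact: c1 | split; [exact: c2 | exact: c3]].
Qed.


Section Localize.
Context {d : measure_display} {T : measurableType d} {R : realType}.
Variable mu : {measure set T -> \bar R}.
Hypothesis cmu : measure_is_complete mu.
Variable X : completeNormedModType R.

Lemma meas_le (h : T -> R) c : measurable_fun setT h -> measurable [set t | h t <= c].
Proof.
move=> mh; have := mh measurableT _ (measurable_itv `]-oo, c]); rewrite setTI.
congr measurable; apply/seteqP; split => t /=; by rewrite in_itv.
Qed.

Lemma pos_piece (E : set T) (B : nat -> set T) : measurable E -> (0 < mu E)%E ->
  (forall n, measurable (B n)) -> (\forall t \ae mu, E t -> exists n, B n t) ->
  exists n, (0 < mu (E `&` B n))%E.
Proof.
move=> mE E0 mB ae; apply: contrapT => /forallNP H.
have H0 n : mu (E `&` B n) = 0%E.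
  apply/eqP; rewrite eq_le measure_ge0 andbT leNgt; apply/negP => h; exact: (H n).
have : mu.-negligible E.
  apply: (negligibleS _ (negligibleU (negligible_bigcup
     (fun n => (negligibleP _ (measurableI _ _ mE (mB n))).2 (H0 n))) ae)).
  move=> t Et; case: (pselect (exists n, B n t)) => [[n Bn]|nB].
    by left; exists n.
  by right => /(_ Et).
by move/(negligibleP _ mE) => E00; rewrite E00 ltxx in E0.
Qed.

Lemma localize (f : T -> X) : bochner_measurable mu X f ->
  forall D, measurable D -> (0 < mu D)%E -> forall eps, 0 < eps ->
  exists A v, [/\ measurable A, A `<=` D, (0 < mu A)%E & forall t, A t -> `|f t - v| <= eps].
Proof.
move=> bf; have bf' := bf; move: bf' => [s [hs ae]] D mD D0 eps eps0.
pose g n t := `|f t - s n t|.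
have mg n : measurable_fun setT (g n).
  have := bochner_mgood_add cmu (-1) bf (hs n) 0.
  by under eq_fun do rewrite add0r scaleN1r.
have mf : measurable_fun setT (fun t => `|f t|).
  have := bochner_mgood cmu bf 0.
  by under eq_fun do rewrite add0r.
pose B n := [set t | g n t <= eps].
have mB n : measurable (B n) by apply: meas_le.
have [n Hn] : exists n, (0 < mu (D `&` B n))%E.
  apply: pos_piece => //; apply: filterS ae => t ht Dt.
  move: ht => /cvgr_dist_le /(_ eps eps0) /filter_ex [n Hn].
  by exists n; rewrite /B /g /=.
have [m [A [w [hA [dis sE]]]]] := hs n.
pose C j := if @insub _ (fun j => (j < m)%N) 'I_m j is Some i then A i else [set t | `|f t| <= eps].
pose v j := if @insub _ (fun j => (j < m)%N) 'I_m j is Some i then w i else 0.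
have mC j : measurable (C j).
  by rewrite /C; case: insubP => [i _ _|_]; [case: (hA i) | apply: meas_le].
have [j Hj] : exists j, (0 < mu ((D `&` B n) `&` C j))%E.
  apply: pos_piece => //; first exact: measurableI.
  apply: aeW => t [Dt Bt].
  case: (pselect (exists l, A l t)) => [[l Alt]|nA].
    by exists (val l); rewrite /C valK.
  exists m; rewrite /C insubN ?ltnn //=.
  have nA' : forall i, ~ A i t by move=> i Ait; apply: nA; exists i.
  by move: Bt; rewrite /B /g /= sE (sum_out w nA') subr0.
exists ((D `&` B n) `&` C j), (v j); split => //.
- by apply: measurableI => //; exact: measurableI.
- by move=> t [[]].
move=> t [[Dt Bt] Ct]; move: Ct Bt; rewrite /C /v /B /g /= sE.
case: insubP => [i _ _ Ct|_ Ct _]; last by rewrite subr0.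
by rewrite (sum_in w dis Ct).
Qed.

Lemma localize_fam (x : nat -> T -> X) k :
  (forall i, (i < k)%N -> bochner_measurable mu X (x i)) ->
  forall D, measurable D -> (0 < mu D)%E -> forall eps, 0 < eps ->
  exists A (v : nat -> X), [/\ measurable A, A `<=` D, (0 < mu A)%E &
    forall i t, (i < k)%N -> A t -> `|x i t - v i| <= eps].
Proof.
elim: k => [|k IH] bx D mD D0 eps eps0.
  by exists D, (fun _ => 0); split.
have [A0 [v0 [mA0 A0D A00 H0]]] := IH (fun i ik => bx i (ltnW ik)) D mD D0 eps eps0.
have [A1 [w [mA1 A1A0 A10 H1]]] := localize (bx k (ltnSn k)) mA0 A00 eps0.
exists A1, (fun i => if i == k then w else v0 i); split => //.
  by move=> t /A1A0 /A0D.
move=> i t; rewrite ltnS leq_eqVlt => /orP[/eqP ->|ik] A1t; first by rewrite eqxx; exact: H1.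
by rewrite (ltn_eqF ik); apply: H0 => //; exact: A1A0.
Qed.

End Localize.

Section Linf.
Context {d : measure_display} {T : measurableType d} {R : realType}.
Variable mu : {measure set T -> \bar R}.
Variable X : completeNormedModType R.

Local Notation Linf g := (Lnorm mu +oo%E (fun t => (`|g t|)%:E)).

Lemma Linf_unfold (g : T -> X) : (0 < mu setT)%E ->
  Linf g = ess_sup mu (fun t => (`|g t|)%:E).
Proof.
move=> mu0; rewrite unlock /Lnorm mu0; congr ess_sup; apply/funext => t /=.
by rewrite normr_id.
Qed.

Lemma Linf_le (g : T -> X) c : (0 < mu setT)%E ->
  (\forall t \ae mu, `|g t| <= c) -> (Linf g <= c%:E)%E.
Proof.
move=> mu0 H; rewrite Linf_unfold //; apply/ess_supP.
by apply: filterS H => t; rewrite lee_fin.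
Qed.

Lemma Linf_ge (g : T -> X) (A : set T) c : (0 < mu setT)%E -> measurable A -> (0 < mu A)%E ->
  (forall t, A t -> c <= `|g t|) -> (c%:E <= Linf g)%E.
Proof.
move=> mu0 mA A0 H; rewrite Linf_unfold //; rewrite leNgt; apply/negP => Hlt.
have [N [mN N0 sub]] := ess_sup_ge mu (fun t => (`|g t|)%:E).
have AN : A `<=` N.
  move=> t At; apply: sub => /= Ht.
  have := le_lt_trans Ht Hlt; rewrite lte_fin => /lt_le_trans /(_ (H t At)).
  by rewrite ltxx.
have negA : mu.-negligible A by exists N.
by move: A0; rewrite ((negligibleP _ mA).1 negA) ltxx.
Qed.

Lemma Linf_one (g : T -> X) : fine (Linf g) = 1 -> (0 < mu setT)%E /\ Linf g = 1%:E.
Proof.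
rewrite unlock /Lnorm; case: ifPn => mu0 /=; last by move=> /esym/eqP; rewrite oner_eq0.
move=> h; split => //; move: h.
case: (ess_sup _ _) => [r| |] /=; first by move=> h; congr EFin; exact: h.
  by move=> /esym/eqP; rewrite oner_eq0.
by move=> /esym/eqP; rewrite oner_eq0.
Qed.


Lemma inf_one (g : T -> X) (A : set T) (v z : X) (e : R) :
  (0 < mu setT)%E -> Linf g = 1%:E -> measurable A -> (0 < mu A)%E ->
  (forall t, A t -> `|g t - v| <= e) -> 1 - 4 * e <= `|v + z| <= 1 + 2 * e -> 0 <= e ->
  `|fine (Linf (fun t => g t + (\1_A t : R) *: z)) - 1| <= 5 * e.
Proof.
move=> mu0 g1 mA A0 Av /andP[vz1 vz2] e0.
have ae1 : \forall t \ae mu, `|g t| <= 1.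
  move: (lexx (1%:E : \bar R)); rewrite -{1}g1 Linf_unfold // => /ess_supP.
  by apply: filterS => t; rewrite lee_fin.
have up : (Linf (fun t => g t + (\1_A t : R) *: z) <= (1 + 3 * e)%:E)%E.
  apply: Linf_le => //; apply: filterS ae1 => t gt1; rewrite indicE.
  case: (boolP (t \in A)) => [/set_mem At|_]; last by rewrite scale0r addr0; lra.
  rewrite scale1r; have -> : g t + z = (g t - v) + (v + z) by rewrite addrA subrK.
  apply: (le_trans (ler_normD _ _)); have := Av t At; lra.
have lo : ((1 - 5 * e)%:E <= Linf (fun t => g t + (\1_A t : R) *: z))%E.
  apply: (Linf_ge mu0 mA A0) => t At; rewrite indicE mem_set // scale1r.
  have E : v + z = (g t + z) - (g t - v) by rewrite opprB [RHS]addrC addrA subrK.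
  have := ler_normB (g t + z) (g t - v); rewrite -E; have := Av t At; lra.
have ge0 := Lnorm_ge0 mu +oo%E (fun t => (`|g t + (\1_A t : R) *: z|)%:E).
move: up lo ge0; case: (Lnorm _ _ _) => [r| |] //=; rewrite ?lee_fin => h1 h2 h3.
by rewrite ler_distlC; apply/andP; split; lra.
Qed.

Lemma inf_y (A : set T) (z : X) : (0 < mu setT)%E -> measurable A -> (0 < mu A)%E ->
  Linf (fun t => (\1_A t : R) *: z) = (`|z|)%:E.
Proof.
move=> mu0 mA A0; apply/eqP; rewrite eq_le; apply/andP; split.
  apply: Linf_le => //; apply: aeW => t; rewrite normrZ indicE.
  by case: (_ \in _); rewrite ?normr1 ?normr0 ?mul1r ?mul0r.
apply: (Linf_ge mu0 mA A0) => t At.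
by rewrite normrZ indicE mem_set // normr1 mul1r.
Qed.

Lemma simple_ind (A : set T) (z : X) : measurable A -> (mu A < +oo)%E ->
  simple_fun mu X (fun t => (\1_A t : R) *: z).
Proof.
move=> mA Afin; exists 1%N, (fun _ => A), (fun _ => z); split => //.
split; first by move=> i j; rewrite (ord1 i) (ord1 j) eqxx.
by apply/funext => t; rewrite big_ord1.
Qed.

Lemma Lp_set_ind (A : set T) (z : X) : (0 < mu setT)%E -> measurable A -> (0 < mu A)%E ->
  (mu A < +oo)%E -> Lp_set mu X +oo%E (fun t => (\1_A t : R) *: z).
Proof.
move=> mu0 mA A0 Afin; split; first exact/simple_bochner/simple_ind.
by rewrite (inf_y z mu0 mA A0) ltry.
Qed.

End Linf.

Lemma asq_pick {R : realType} (X : completeNormedModType R) (asq : ASQ X) n (w : 'I_n.+1 -> X)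
  (hw : forall i, `|w i| = 1) (e : R) (e0 : 0 < e) :
  exists z : X, `|z| <= 1 /\ 1 - e <= `|z| /\
    forall i, `|w i + z| <= 1 + e /\ `|w i - z| <= 1 + e.
Proof.
pose F (j : 'I_(n + n.+1).+1) : X :=
  match fintype.split (j : 'I_(n.+1 + n.+1)) with inl i => w i | inr i => - w i end.
have hF j : [set: X] (F j) /\ `|F j| = 1.
  by split => //; rewrite /F; case: fintype.split => i; rewrite ?normrN hw.
have [y [hy [c1 c2]]] := asq _ F hF.
have H1 : \forall k \near \oo, 1 - e <= `|y k|.
  near=> k.
  have : `|1 - `|y k| | <= e by near: k; apply: cvgr_dist_le.
  by rewrite ler_distlC => /andP[].
have H2 : \forall k \near \oo, forall j, `|F j + y k| <= 1 + e.
  apply: filter_forall => j; near=> k.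
  have : `|1 - `|F j + y k| | <= e by near: k; apply: cvgr_dist_le => //; move: (c2 j).
  by rewrite ler_distlC => /andP[].
have [k [h1 h2]] : exists k, 1 - e <= `|y k| /\ forall j, `|F j + y k| <= 1 + e.
  by apply: (filter_ex (F := \oo)); near=> k; split; near: k.
exists (y k); split; first by case: (hy k).
split => // i; split.
  by have := h2 (fintype.unsplit (inl i)); rewrite /F unsplitK.
have := h2 (@fintype.unsplit n.+1 n.+1 (inr i)); rewrite /F unsplitK.
by rewrite -normrN opprD opprK addrC.
Unshelve. all: by end_near. Qed.


Lemma vz_bound {R : realType} {X : normedModType R} (v w z : X) (e : R) :
  `|w| = 1 -> v = `|v| *: w -> `|v| <= 1 + e -> `|z| <= 1 -> 1 - e <= `|z| ->
  `|w + z| <= 1 + e -> `|w - z| <= 1 + e -> 0 <= e ->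
  1 - 4 * e <= `|v + z| <= 1 + 2 * e.
Proof.
move=> hw vw vb z1 z2 wz1 wz2 e0.
have := phi_bound hw z1 z2 wz1 wz2 (normr_ge0 v) vb e0.
rewrite -vw => /andP[h1 h2]; apply/andP; split; lra.
Qed.

Lemma unit_dir {R : realType} {X : normedModType R} (eX v : X) :
  `|eX| = 1 -> exists w : X, `|w| = 1 /\ v = `|v| *: w.
Proof.
move=> heX; case: (eqVneq v 0) => [->|v0].
  by exists eX; rewrite normr0 scale0r.
exists (`|v|^-1 *: v); split.
  by rewrite normrZ ger0_norm ?invr_ge0 // mulVf // normr_eq0.
by rewrite scalerA mulfV ?normr_eq0 // scale1r.
Qed.

Section LinfMain.
Context {d : measure_display} {T : measurableType d} {R : realType}.
Variable mu : {measure set T -> \bar R}.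
Hypothesis cmu : measure_is_complete mu.
Hypothesis sfin : sigma_finite setT mu.
Variable X : completeNormedModType R.

Local Notation Linf g := (Lnorm mu +oo%E (fun t => (`|g t|)%:E)).

Lemma inf_setup (x0 : T -> X) : Lp_norm mu X +oo%E x0 = 1 ->
  [/\ (0 < mu setT)%E, exists eX : X, `|eX| = 1 &
      exists D, [/\ measurable D, (0 < mu D)%E & (mu D < +oo)%E]].
Proof.
move=> /Linf_one [mu0 L1]; split => //.
  case: (pselect (exists t, x0 t != 0)) => [[t xt]|nx].
    exists (`|x0 t|^-1 *: x0 t).
    by rewrite normrZ ger0_norm ?invr_ge0 // mulVf // normr_eq0.
  have : (Linf x0 <= 0%:E)%E.
    apply: Linf_le => //; apply: aeW => t.
    have -> : x0 t = 0 by apply/eqP; apply: contrapT => h; apply: nx; exists t; apply/negP.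
    by rewrite normr0.
  by rewrite L1 lee_fin ler10.
have [F Fcov Fp] := sfin.
have [m Hm] : exists m, (0 < mu (setT `&` F m))%E.
  apply: pos_piece => //; first by move=> m; case: (Fp m).
  apply: aeW => t _; have : [set: T] t by [].
  by rewrite Fcov => -[m _ Fm]; exists m.
by exists (F m); rewrite setTI in Hm; case: (Fp m).
Qed.

Lemma inf_vbound (g : T -> X) (A : set T) (v : X) (e : R) :
  Linf g = 1%:E -> (0 < mu setT)%E -> measurable A -> (0 < mu A)%E ->
  (forall t, A t -> `|g t - v| <= e) -> `|v| <= 1 + e.
Proof.
move=> g1 mu0 mA A0 Av.
have [N [mN N0 sub]] : \forall t \ae mu, `|g t| <= 1.
  move: (lexx (1%:E : \bar R)); rewrite -{1}g1 Linf_unfold // => /ess_supP.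
  by apply: filterS => t; rewrite lee_fin.
have [t [At Nt]] : exists t, A t /\ ~ N t.
  apply: contrapT => H.
  have AN : A `<=` N.
    move=> t At; apply: contrapT => Nt; apply: H; by exists t.
  have negA : mu.-negligible A by exists N.
  by move: A0; rewrite ((negligibleP _ mA).1 negA) ltxx.
have gt : `|g t| <= 1 by apply: contrapT => h; apply: Nt; apply: sub.
have -> : v = g t - (g t - v) by rewrite opprB addrC subrK.
by apply: (le_trans (ler_normB _ _)); have := Av t At; lra.
Qed.

Lemma sub_fin (A D : set T) : measurable A -> measurable D -> A `<=` D ->
  (mu D < +oo)%E -> (mu A < +oo)%E.
Proof. by move=> mA mD AD; apply: le_lt_trans; apply: le_measure => //; rewrite inE. Qed.

Lemma asq_step (asq : ASQ X) n (x : 'I_n.+1 -> T -> X)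
  (hx : forall i, Lp_set mu X +oo%E (x i) /\ Lp_norm mu X +oo%E (x i) = 1) (e : R) (e0 : 0 < e) :
  exists y, Lp_set mu X +oo%E y /\ Lp_norm mu X +oo%E y <= 1 /\ 1 - e <= Lp_norm mu X +oo%E y /\
    forall i, `|Lp_norm mu X +oo%E (x i + y) - 1| <= 5 * e.
Proof.
have [mu0 [eX heX] [D [mD D0 Dfin]]] := inf_setup (hx ord0).2.
have L1 i : Linf (x i) = 1%:E := (Linf_one (hx i).2).2.
have [A [v [mA AD A0 Hv']]] := localize_fam cmu (x := fun j => x (inord j)) (k := n.+1)
   (fun j _ => (hx (inord j)).1.1) mD D0 e0.
have Hv (i : 'I_n.+1) t : A t -> `|x i t - v i| <= e.
  by move=> At; have := Hv' i t (ltn_ord i) At; rewrite inord_val.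
have Afin := sub_fin mA mD AD Dfin.
have vb (i : 'I_n.+1) : `|v i| <= 1 + e := inf_vbound (L1 i) mu0 mA A0 (Hv i).
have wex (i : 'I_n.+1) : exists w : X, `|w| = 1 /\ v i = `|v i| *: w := unit_dir (v i) heX.
have [w hw] := choice wex.
have [z [z1 [z2 hz]]] := asq_pick asq (fun i => (hw i).1) e0.
exists (fun t => (\1_A t : R) *: z); split; first exact: Lp_set_ind.
rewrite /Lp_norm (inf_y z mu0 mA A0) /=; split => //; split => // i.
have [wz1 wz2] := hz i.
exact: (inf_one mu0 (L1 i) mA A0 (Hv i)
  (vz_bound (hw i).1 (hw i).2 (vb i) z1 z2 wz1 wz2 (ltW e0)) (ltW e0)).
Qed.

Lemma lasq_step (lasq : LASQ X) (x : T -> X)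
  (hx : Lp_set mu X +oo%E x) (hn : Lp_norm mu X +oo%E x = 1) (e : R) (e0 : 0 < e) :
  exists y, Lp_set mu X +oo%E y /\ Lp_norm mu X +oo%E y <= 1 /\ 1 - e <= Lp_norm mu X +oo%E y /\
    `|Lp_norm mu X +oo%E (x + y) - 1| <= 5 * e /\ `|Lp_norm mu X +oo%E (x - y) - 1| <= 5 * e.
Proof.
have [mu0 [eX heX] [D [mD D0 Dfin]]] := inf_setup hn.
have L1 : Linf x = 1%:E := (Linf_one hn).2.
have [A [v [mA AD A0 Hv]]] := localize cmu hx.1 mD D0 e0.
have Afin := sub_fin mA mD AD Dfin.
have vb : `|v| <= 1 + e := inf_vbound L1 mu0 mA A0 Hv.
have [w [hw vw]] := unit_dir v heX.
have [z [z1 [z2 [wz1 wz2]]]] := lasq_pick lasq hw e0.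
exists (fun t => (\1_A t : R) *: z); split; first exact: Lp_set_ind.
rewrite /Lp_norm (inf_y z mu0 mA A0) /=; split => //; split => //; split.
  exact: (inf_one mu0 L1 mA A0 Hv (vz_bound hw vw vb z1 z2 wz1 wz2 (ltW e0)) (ltW e0)).
have -> : Lnorm mu +oo%E (fun t => (`|(x - (fun t => (\1_A t : R) *: z)) t|)%:E) =
          Lnorm mu +oo%E (fun t => (`|x t + (\1_A t : R) *: (- z)|)%:E).
  by apply: eq_Lnorm => t /=; rewrite scalerN.
have z1' : `|- z| <= 1 by rewrite normrN.
have z2' : 1 - e <= `|- z| by rewrite normrN.
have wz1' : `|w + - z| <= 1 + e by [].
have wz2' : `|w - - z| <= 1 + e by rewrite opprK.
exact: (inf_one mu0 L1 mA A0 Hv (vz_bound hw vw vb z1' z2' wz1' wz2' (ltW e0)) (ltW e0)).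
Qed.

Lemma e5_facts (k : nat) : 0 < (k.+1%:R)^-1 / 5 :> R /\ 5 * ((k.+1%:R)^-1 / 5) <= (k.+1%:R)^-1 :> R.
Proof.
have q0 : 0 < (k.+1%:R)^-1 :> R by rewrite invr_gt0.
move: q0; move: (k.+1%:R)^-1 => q q0; split; lra.
Qed.

Lemma fin_bound (N q : R) : 0 < q / 5 -> N <= 1 -> 1 - q / 5 <= N -> `|N - 1| <= q.
Proof. by move=> a h2 h3; rewrite ler_distlC; apply/andP; split; lra. Qed.

Lemma part3a (asq : ASQ X) : ASQ_in (Lp_set mu X +oo%E) (Lp_norm mu X +oo%E).
Proof.
move=> n x hx.
have [y hy] := choice (fun k => asq_step asq hx (e5_facts k).1).
exists y; split; first by move=> k; have [h1 [h2 _]] := hy k.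
split.
  apply: cvg_to1 => k; have [_ [h2 [h3 _]]] := hy k.
  exact: fin_bound (e5_facts k).1 h2 h3.
move=> i; apply: cvg_to1 => k; have [_ [_ [_ h4]]] := hy k.
exact: le_trans (h4 i) (e5_facts k).2.
Qed.

Lemma part3b (lasq : LASQ X) : LASQ_in (Lp_set mu X +oo%E) (Lp_norm mu X +oo%E).
Proof.
move=> x hx hn.
have [y hy] := choice (fun k => lasq_step lasq hx hn (e5_facts k).1).
exists y; split; first by move=> k; have [h1 [h2 _]] := hy k.
split.
  apply: cvg_to1 => k; have [_ [h2 [h3 _]]] := hy k.
  exact: fin_bound (e5_facts k).1 h2 h3.
split; apply: cvg_to1 => k; have [_ [_ [_ [h4 h5]]]] := hy k.
  exact: le_trans h4 (e5_facts k).2.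
exact: le_trans h5 (e5_facts k).2.
Qed.

End LinfMain.


Section Lp.
Context {d : measure_display} {T : measurableType d} {R : realType}.
Variable mu : {measure set T -> \bar R}.
Variable p : R.
Hypothesis p1 : 1 <= p.

Let p0 : 0 < p. Proof. exact: (lt_le_trans ltr01 p1). Qed.

Local Notation LN f := (Lnorm mu p%:E (EFin \o f)).

Lemma mpow (f : T -> R) : measurable_fun setT f ->
  measurable_fun setT (fun t => ((`|f t| `^ p)%:E : \bar R)).
Proof.
move=> mf; apply/measurable_EFinP; apply: (measurableT_comp (measurable_powR p)).
exact: measurableT_comp.
Qed.

Lemma LN_int (f : T -> R) : LN f = ((\int[mu]_t (`|f t| `^ p)%:E) `^ p^-1)%E.
Proof.
by rewrite unlock /Lnorm.
Qed.

Lemma LN_mono (f g : T -> R) : measurable_fun setT f -> measurable_fun setT g ->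
  (forall t, 0 <= f t <= g t) -> (LN f <= LN g)%E.
Proof.
move=> mf mg fg; rewrite !LN_int; apply: gt0_ler_poweR.
- by rewrite invr_ge0 ltW.
- by rewrite in_itv /= leey andbT integral_ge0 // => t _; rewrite lee_fin powR_ge0.
- by rewrite in_itv /= leey andbT integral_ge0 // => t _; rewrite lee_fin powR_ge0.
apply: ge0_le_integral => //.
- exact: mpow.
- exact: mpow.
move=> t _; rewrite lee_fin; have /andP[f0 fg'] := fg t.
have g0 : 0 <= g t by exact: le_trans fg'.
apply: ge0_ler_powR; rewrite ?nnegrE ?normr_ge0 ?ger0_norm //; exact: ltW.
Qed.

Lemma LN_scale (f : T -> R) (c : R) : measurable_fun setT f -> (LN f < +oo)%E -> 0 <= c ->
  LN (fun t => c * f t) = (c%:E * LN f)%E.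
Proof.
move=> mf fin c0.
have p1' : (1 <= p%:E)%E by rewrite lee_fin.
have Pf : f \in Lfun mu p%:E.
  by apply/andP; split; rewrite inE //=.
have := LnormZ (@Lfun_Sub _ _ _ mu p%:E p1' f Pf) c.
by rewrite ger0_norm.
Qed.


Definition GLp (f : T -> R) := measurable_fun setT f /\ (LN f < +oo)%E.
Definition NLp (f : T -> R) := fine (LN f).

Lemma LN_fin (f : T -> R) : (LN f < +oo)%E -> LN f \is a fin_num.
Proof. by move=> h; rewrite ge0_fin_numE // Lnorm_ge0. Qed.

Lemma GLp_mono (f g : T -> R) : GLp g -> measurable_fun setT f ->
  (forall t, 0 <= f t <= g t) -> GLp f /\ NLp f <= NLp g.
Proof.
move=> [mg fg] mf H; have le := LN_mono mf mg H.
have ff : (LN f < +oo)%E by exact: le_lt_trans le fg.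
split => //; apply: fine_le => //; exact: LN_fin.
Qed.

Lemma GLp_add (f g : T -> R) : GLp f -> GLp g -> GLp (f \+ g) /\ NLp (f \+ g) <= NLp f + NLp g.
Proof.
move=> [mf ff] [mg fg]; have le := @minkowski_EFin _ _ _ mu f g p mf mg p1.
have fs : (LN (f \+ g)%R < +oo)%E by apply: le_lt_trans le _; rewrite lte_add_pinfty.
split; first by split => //; exact: measurable_funD.
rewrite /NLp -fineD; try exact: LN_fin.
apply: fine_le => //; first exact: LN_fin.
by rewrite fin_numD !LN_fin.
Qed.

Lemma GLp_scale (c : R) (f : T -> R) : 0 <= c -> GLp f ->
  GLp (fun t => c * f t) /\ NLp (fun t => c * f t) = c * NLp f.
Proof.
move=> c0 [mf ff]; have E := LN_scale mf ff c0.
split; last by rewrite /NLp E fineM // LN_fin.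
split; first exact: measurable_funM.
by rewrite E; rewrite -(fineK (LN_fin ff)) -EFinM ltry.
Qed.

Lemma GLp_ind (A : set T) : measurable A -> (mu A < +oo)%E -> GLp (\1_A).
Proof.
move=> mA Afin; split; first exact: measurable_indic.
rewrite LN_int; apply: poweR_lty.
rewrite (eq_integral (fun t => (\1_A t)%:E)).
  by rewrite integral_indic // setIT.
move=> t _; rewrite indicE; case: (t \in A).
  by rewrite normr1 powR1.
by rewrite normr0 powR0 // gt_eqF.
Qed.

End Lp.


Section LpDense.
Context {d : measure_display} {T : measurableType d} {R : realType}.
Variable mu : {measure set T -> \bar R}.
Hypothesis cmu : measure_is_complete mu.
Variable X : completeNormedModType R.
Variable p : R.
Hypothesis p1 : 1 <= p.

Let p0 : 0 < p. Proof. exact: (lt_le_trans ltr01 p1). Qed.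

Local Notation LN f := (Lnorm mu p%:E (EFin \o f)).

Lemma restrict_simple (s : T -> X) (B : set T) : measurable B -> simple_fun mu X s ->
  simple_fun mu X (fun t => (\1_B t : R) *: s t).
Proof.
move=> mB [m [A [w [hA [dis sE]]]]].
exists m, (fun i => A i `&` B), w; split.
  move=> i; have [mA fA] := hA i; split; first exact: measurableI.
  apply: le_lt_trans fA; apply: le_measure => //; rewrite ?inE //; exact: measurableI.
split.
  by move=> i j ij; rewrite setIACA (dis i j ij) set0I.
apply/funext => t; rewrite sE scaler_sumr; apply: eq_bigr => i _.
by rewrite scalerA indicI /= mulrC.
Qed.

Lemma powR_cvg0_seq (u : nat -> R) : (forall n, 0 <= u n) -> u @ \oo --> 0 ->
  (fun n => u n `^ p) @ \oo --> 0.
Proof.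
move=> u0 cu; apply/cvgrPdist_le => eps eps0.
have q0 : 0 < eps `^ p^-1 by rewrite powR_gt0.
near=> n.
have : `|0 - u n| <= eps `^ p^-1 by near: n; apply: cvgr_dist_le.
rewrite sub0r normrN ger0_norm // => h.
rewrite sub0r normrN ger0_norm ?powR_ge0 //.
have -> : eps = (eps `^ p^-1) `^ p by rewrite -powRrM mulVf ?gt_eqF // powRr1 // ltW.
apply: ge0_ler_powR; [exact: ltW | by rewrite nnegrE | by rewrite nnegrE powR_ge0 | exact: h].
Unshelve. all: by end_near. Qed.


Lemma Lp_dense (x : T -> X) : bochner_measurable mu X x ->
  (LN (fun t => `|x t|%R) < +oo)%E -> forall e, 0 < e ->
  exists s, simple_fun mu X s /\ NLp mu p (fun t => `|x t - s t|) < e.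
Proof.
move=> bx fx e e0.
have [sq [hsq ae]] := bx.
have mx : measurable_fun setT (fun t => `|x t|).
  by have := bochner_mgood cmu bx 0; under eq_fun do rewrite add0r.
have msq n : measurable_fun setT (fun t => `|sq n t|).
  by have := simple_mgood (hsq n) 0; under eq_fun do rewrite add0r.
pose B n := [set t | `|sq n t| - 2 * `|x t| <= 0].
have mB n : measurable (B n).
  apply: meas_le; apply: measurable_funB => //; exact: measurable_funM.
pose s' n t := (\1_(B n) t : R) *: sq n t.
have hs' n : simple_fun mu X (s' n) by apply: restrict_simple.
have bound n t : `|s' n t| <= 2 * `|x t|.
  rewrite /s' normrZ indicE; case: (boolP (t \in B n)) => [/set_mem|_].
    by rewrite /B /= normr1 mul1r; lra.
  by rewrite normr0 mul0r mulr_ge0.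
pose h n t := `|x t - s' n t|.
have conv : \forall t \ae mu, (fun n => h n t) @ \oo --> 0.
  apply: filterS ae => t ht; apply/cvgrPdist_le => eps eps0.
  case: (eqVneq (x t) 0) => [xt0|xt0].
    near=> n; have := bound n t; rewrite xt0 normr0 mulr0 normr_le0 => /eqP s0.
    by rewrite /h s0 xt0 subr0 normr0 subr0 normr0 ltW.
  have m0 : 0 < Num.min eps `|x t| by rewrite lt_min eps0 normr_gt0.
  near=> n.
  have : `|x t - sq n t| <= Num.min eps `|x t| by near: n; apply: cvgr_dist_le.
  rewrite le_min => /andP[h1 h2].
  have inB : B n t.
    rewrite /B /=; have := ler_normB (x t) (x t - sq n t).
    rewrite opprB addrC subrK => h3; lra.
  by rewrite /h /s' indicE mem_set // scale1r sub0r normrN normr_id.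
have mh n : measurable_fun setT (h n).
  have := bochner_mgood_add cmu (-1) bx (hs' n) 0.
  by under eq_fun do rewrite add0r scaleN1r.
have hb n t : h n t <= 3 * `|x t|.
  by apply: (le_trans (ler_normB _ _)); have := bound n t; lra.
pose F n t := ((h n t) `^ p)%:E : \bar R.
pose Gd t := ((3 * `|x t|) `^ p)%:E : \bar R.
have mF n : measurable_fun setT (F n).
  by apply/measurable_EFinP; apply: (measurableT_comp (measurable_powR p)).
have mGd : measurable_fun setT Gd.
  apply/measurable_EFinP; apply: (measurableT_comp (measurable_powR p)).
  exact: measurable_funM.
have Fcv : \forall t \ae mu, forall _ : [set: T] t, F ^~ t @ \oo --> (cst 0%E : T -> \bar R) t.
  apply: filterS conv => t ht _; apply: cvg_EFin; first exact: nearW.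
  by apply: powR_cvg0_seq => // n; exact: normr_ge0.
have ig : mu.-integrable setT Gd.
  apply/integrableP; split => //.
  have xfin : (\int[mu]_t (`|x t| `^ p)%:E < +oo)%E.
    apply: (@lty_poweRy _ _ p^-1); first by rewrite invr_neq0 // gt_eqF.
    by move: fx; rewrite LN_int; under eq_integral do rewrite normr_id.
  rewrite (eq_integral (fun t => ((3 `^ p)%:E * (`|x t| `^ p)%:E)%E)); last first.
    move=> t _; rewrite /Gd abse_EFin ger0_norm ?powR_ge0 // powRM //.
  have fin : (\int[mu]_t (`|x t| `^ p)%:E)%E \is a fin_num.
    by rewrite ge0_fin_numE // integral_ge0 // => t _; rewrite lee_fin powR_ge0.
  rewrite ge0_integralZl //; first by rewrite -(fineK fin) -EFinM ltry.
  all: try by move=> t _; rewrite lee_fin powR_ge0.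
  all: try by rewrite lee_fin powR_ge0.
  apply/measurable_EFinP; apply: (measurableT_comp (measurable_powR p)); exact: mx.
have Fg : \forall t \ae mu, forall n, [set: T] t -> (`|F n t| <= Gd t)%E.
  apply: aeW => t n _; rewrite /F /Gd abse_EFin ger0_norm ?powR_ge0 // lee_fin.
  apply: ge0_ler_powR; [exact: ltW | by rewrite nnegrE /h normr_ge0 | | exact: hb].
  by rewrite nnegrE mulr_ge0.
have [_ _ D3] := @dominated_convergence _ _ _ mu setT measurableT F (cst 0%E) Gd mF
  (measurable_cst _) Fcv ig Fg.
rewrite integral0 in D3.
pose del := (e / 2) `^ p.
have del0 : 0 < del by rewrite powR_gt0 // divr_gt0.
have [n [fin_n le_n]] : exists n, (\int[mu]_(t in setT) F n t)%E \is a fin_num /\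
    fine (\int[mu]_(t in setT) F n t)%E <= del.
  move/fine_cvgP : D3 => [Hfin Hc].
  apply: (filter_ex (F := \oo)); near=> n; split.
    by near: n.
  have : `|0 - fine (\int[mu]_(t in setT) F n t)%E| <= del by near: n; apply: cvgr_dist_le.
  by rewrite sub0r normrN => /(le_trans (ler_norm _)).
exists (s' n); split => //.
have LNe : (LN (h n) <= (e / 2)%:E)%E.
  rewrite LN_int.
  rewrite (eq_integral (F n)); last by move=> t _; rewrite /F normr_id.
  rewrite -(fineK fin_n).
  have -> : (e / 2)%:E = ((del%:E) `^ p^-1)%E.
    by rewrite poweR_EFin /del -powRrM mulfV ?gt_eqF // powRr1 // ltW // divr_gt0.
  apply: gt0_ler_poweR; first by rewrite invr_ge0 ltW.
  - rewrite in_itv /= leey andbT; rewrite fineK //.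
    by apply: integral_ge0 => t _; rewrite /F lee_fin powR_ge0.
  - by rewrite in_itv /= leey andbT lee_fin ltW.
  by rewrite lee_fin.
have ge0 := Lnorm_ge0 mu p%:E (EFin \o h n).
rewrite /NLp; move: LNe ge0; case: (Lnorm _ _ _) => [r| |] //=; rewrite ?lee_fin => h1 h2.
lra.
Unshelve. all: by end_near. Qed.

End LpDense.

Lemma part2 {d : measure_display} {T : measurableType d} {R : realType}
  (mu : {measure set T -> \bar R}) (cmu : measure_is_complete mu)
  (X : completeNormedModType R) (p : R) (p1 : 1 <= p) (lasq : LASQ X) :
  LASQ_in (Lp_set mu X p%:E) (Lp_norm mu X p%:E).
Proof.
move=> x [bx fx] Nx.
have mx : measurable_fun setT (fun t => `|x t|).
  by have := bochner_mgood cmu bx 0; under eq_fun do rewrite add0r.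
have Gx : GLp mu p (fun t => `|x t|) by split.
have [y [hy [c1 [c2 c3]]]] := core_main cmu (N := NLp mu p) (G := GLp mu p)
  (fun f h => h.1) (GLp_mono p1) (GLp_add p1) (GLp_scale p1) (GLp_ind p1) bx Gx Nx
  (Lp_dense cmu p1 bx fx) lasq.
exists y; split.
  move=> k; have [h1 [h2 h3]] := hy k; split => //; split => //.
    exact: simple_bochner.
  exact: h2.2.
by split; [exact: c1 | split; [exact: c2 | exact: c3]].
Qed.

Unset Implicit Arguments.

Theorem theorem4p5 (R : realType) (d : measure_display) (T : measurableType d)
  (mu : {measure set T -> \bar R})
  (mu_complete : measure_is_complete mu) (mu_sfin : sigma_finite setT mu)
  (X : completeNormedModType R) :
  [/\ (* E(X) is LASQ *)
      (forall (inE : set (T -> R)) (nE : (T -> R) -> R),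
         kothe_space mu inE nE -> LASQ X -> simple_dense_in_EX mu X inE nE ->
         LASQ_in (EX mu X inE) (EX_norm X nE)),
      (* L^p(mu, X), 1 <= p < oo *)
      (forall p : R, 1 <= p -> LASQ X ->
         LASQ_in (Lp_set mu X p%:E) (Lp_norm mu X p%:E))
    & (* L^oo(mu, X) *)
      (ASQ X -> ASQ_in (Lp_set mu X +oo%E) (Lp_norm mu X +oo%E)) /\
      (LASQ X -> LASQ_in (Lp_set mu X +oo%E) (Lp_norm mu X +oo%E))].
Proof.
split.
- move=> inE nE K lasq dens; exact: (part1 mu_complete K lasq dens).
- move=> p p1 lasq; exact: (part2 mu_complete p1 lasq).
- split; [move=> asq; exact: (part3a mu_complete mu_sfin asq) | move=> lasq; exact: (part3b mu_complete mu_sfin lasq)].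
Qed.
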